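(* Let $q$ be a prime power and let $C$ be an $[n,k,d]_q$ Griesmer optimal linear code with $k\ge 3$. Then: (1) if $\Gamma_q(n,k,d)<k$, then $q\mid d$; (2) if $q\nmid d$, then $C$ is a Griesmer code, i.e. $n=g_q(k,d)$.
   Context: An $[n,k,d]_q$ linear code is a $k$-dimensional subspace of $\mathbb{F}_q^n$ with minimum nonzero Hamming weight $d$. Let $g_q(k,d)=\sum_{i=0}^{k-1}\lceil d/q^i\rceil$ (the Griesmer bound says $n\ge g_q(k,d)$ for every $[n,k,d]_q$ code). $C$ is a Griesmer code if $n=g_q(k,d)$, and Griesmer optimal if $n<g_q(k,d+1)$ (so the Griesmer bound rules out an $[n,k,d+1]_q$ code). For a Griesmer optimal $[n,k,d]_q$ code, $\Gamma_q(n,k,d)=k$ if $n=g_q(k,d)$; otherwise $\Gamma_q(n,k,d)$ is the smallest non-negative integer $k_1$ such that $n-g_q(k_1,d)\ge g_q\!\left(k-k_1,\lceil d/q^{k_1}\rceil+1\right)$ (with $g_q(0,\cdot)=0$). *)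

(* Defs.v *)
From mathcomp Require Import all_boot all_algebra all_field.
Set Implicit Arguments. Unset Strict Implicit. Unset Printing Implicit Defensive.
Import GRing.Theory.

Definition ceil_div (m p : nat) : nat := (m + p - 1) %/ p.

Definition griesmer_g (q k d : nat) : nat := \sum_(i < k) ceil_div d (q ^ i).

Definition hwt (F : fieldType) (n : nat) (c : 'rV[F]_n) : nat :=
  #|[set i : 'I_n | c ord0 i != 0%R]|.

Definition is_linear_code (F : finFieldType) (n : nat) (C : {vspace 'rV[F]_n})
    (k d : nat) : Prop :=
  [/\ \dim C = k,
      (exists2 c, c \in C & (c != 0%R) /\ hwt c = d) &
      (forall c, c \in C -> c != 0%R -> d <= hwt c)].

Definition griesmer_optimal (q n k d : nat) : Prop := n < griesmer_g q k d.+1.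

(* The condition n - g_q(k1,d) >= g_q(k-k1, ceil(d/q^k1)+1), written additively
   (equivalent over the integers). *)
Definition gamma_cond (q n k d k1 : nat) : bool :=
  griesmer_g q k1 d + griesmer_g q (k - k1) (ceil_div d (q ^ k1)).+1 <= n.

(* Gamma_q(n,k,d): k if n = g_q(k,d), otherwise the least k1 >= 0 satisfying
   gamma_cond (k1 = k always satisfies it, so searching 0..k suffices). *)
Definition Gamma (q n k d : nat) : nat :=
  if n == griesmer_g q k d then k
  else find (gamma_cond q n k d) (iota 0 k.+1).

(* Main.v *)
Require Import Defs.
From mathcomp Require Import all_boot all_algebra all_field.
From mathcomp Require Import zify.
Import GRing.Theory.

Lemma ceil_le (m p c : nat) : 0 < p -> (ceil_div m p <= c) = (m <= c * p).
Proof.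
move=> p0; rewrite /ceil_div -ltnS -[c.+1]addn1 ltn_divLR //.
apply/idP/idP; rewrite mulnDl mul1n; lia.
Qed.

Lemma ceil_ceil (d a b : nat) : 0 < a -> 0 < b ->
  ceil_div (ceil_div d a) b = ceil_div d (a * b).
Proof.
move=> a0 b0.
have key c : (ceil_div (ceil_div d a) b <= c) = (ceil_div d (a * b) <= c).
  by rewrite ceil_le // ceil_le // ceil_le ?muln_gt0 ?a0 ?b0 // mulnAC mulnA.
by apply/eqP; rewrite ssrnat.eqn_leq key leqnn /= -key leqnn.
Qed.

Lemma ceil1 m : ceil_div m 1 = m.
Proof. by rewrite /ceil_div addnK divn1. Qed.

Lemma g_rec q k d : 0 < q ->
  griesmer_g q k.+1 d = d + griesmer_g q k (ceil_div d q).
Proof.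
move=> q0; rewrite /griesmer_g big_ord_recl /= expn0 ceil1; congr (_ + _).
apply: eq_bigr => i _; rewrite /bump /= add1n expnS ceil_ceil //.
by rewrite expn_gt0 q0.
Qed.

Lemma ceil_succ d p : 0 < p -> ~~ (p %| d) -> ceil_div d.+1 p = ceil_div d p.
Proof.
move=> p0 nd; apply/eqP; rewrite ssrnat.eqn_leq; apply/andP; split.
  rewrite ceil_le //.
  have : d <= ceil_div d p * p by rewrite -ceil_le.
  rewrite leq_eqVlt => /orP [/eqP E|//].
  by move: nd; rewrite E dvdn_mull.
by rewrite /ceil_div; apply: leq_div2r; lia.
Qed.

Lemma g_succ q k d : 0 < q -> ~~ (q %| d) ->
  griesmer_g q k.+1 d.+1 = (griesmer_g q k.+1 d).+1.
Proof.
move=> q0 nd; rewrite !g_rec // addSn; congr (_.+1 + _).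
rewrite ceil_succ //.
Qed.

Section Gr.
Variable (F : finFieldType) (n : nat).

Definition wtS (P : pred 'I_n) (z : 'rV[F]_n) : nat :=
  \sum_(i | P i) (z ord0 i != 0%R : nat).

Lemma count_alpha (x y : F) : x != 0%R ->
  \sum_(a : F) ((y - a * x)%R != 0%R : nat) = #|F|.-1.
Proof.
move=> x0; rewrite -(cardC1 (y / x)%R) -(sum1_card (predC1 (y / x)%R)).
rewrite [RHS]big_mkcond /=; apply: eq_bigr => a _.
rewrite !inE; have [->|ne] := eqVneq a (y / x)%R; first by rewrite divfK // subrr eqxx.
have [|//] := eqVneq (y - a * x)%R 0%R; move/eqP; rewrite subr_eq0 => /eqP E.
by move: ne; rewrite E mulfK // eqxx.
Qed.

Lemma griesmer_gen k : forall (V : {vspace 'rV[F]_n}) (P : pred 'I_n) d,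
  \dim V = k -> (forall y, y \in V -> y != 0%R -> d <= wtS P y) ->
  griesmer_g #|F| k d <= #|P|.
Proof.
elim: k => [|k IH] V P d dimV Hd.
  by rewrite /griesmer_g big_ord0.
have V0 : V != 0%VS by rewrite -dimv_eq0 dimV.
have x0P : (vpick V \in V) && (vpick V != 0%R) by rewrite memv_pick vpick0 V0.
case: (@arg_minnP _ (vpick V) (fun y => (y \in V) && (y != 0%R)) (wtS P) x0P) => x /andP [xV xn0] xmin.
set d' := wtS P x.
have dd' : d <= d' by apply: Hd.
set P' := [pred i | P i && (x ord0 i == 0%R)].
have cardP : #|P| = d' + #|P'|.
  rewrite -(cardID [pred i | x ord0 i != 0%R] P) /d' /wtS; congr (_ + _).
    rewrite -sum1_card big_mkcond [RHS]big_mkcond /=; apply: eq_bigr => i _.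
    rewrite !inE /=; have -> : (i \in P) = P i by []. by case: (P i); case: (x ord0 i != 0%R).
  by rewrite /P'; apply: eq_card => i; rewrite !inE /= negbK andbC.
set W := (V :\: <[x]>)%VS.
have dimW : \dim W = k.
  have sxV : (<[x]> <= V)%VS by rewrite -memvE.
  have := dimv_disjoint_sum (capv_diff V <[x]>).
  rewrite addv_diff (addv_idPl sxV) dim_vline xn0 dimV addn1; by case.
have q0 : 0 < #|F| by apply/card_gt0P; exists 0%R.
rewrite g_rec // cardP leq_add //.
apply: (IH W) => // y yW yn0.
have yV : y \in V by move: yW; apply/subvP; apply: diffvSl.
have ne a : (y - a *: x)%R != 0%R.
  apply/eqP; move/eqP; rewrite subr_eq0 => /eqP E.
  have : y \in (W :&: <[x]>)%VS by rewrite memv_cap yW E memvZ // memv_line.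
  by rewrite capv_diff memv0 (negbTE yn0).
have lo : #|F| * d' <= \sum_(a : F) wtS P (y - a *: x)%R.
  rewrite -sum_nat_const; apply: leq_sum => a _; apply: xmin.
  by rewrite ne andbT memvB // memvZ.
have split a : wtS P (y - a *: x)%R =
    \sum_(i | P i && (x ord0 i != 0%R)) ((y ord0 i - a * x ord0 i)%R != 0%R : nat)
    + wtS P' y.
  rewrite /wtS (bigID [pred i | x ord0 i != 0%R]) /=; congr (_ + _).
    by apply: eq_bigr => i _; rewrite !mxE.
  apply: eq_big => [i|i /andP [_]]; first by rewrite negbK.
  by rewrite negbK !mxE => /eqP ->; rewrite mulr0 subr0.
have up : \sum_(a : F) wtS P (y - a *: x)%R = d' * #|F|.-1 + #|F| * wtS P' y.
  rewrite (eq_bigr _ (fun a _ => split a)) big_split /= sum_nat_const.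
  congr (_ + _).
  rewrite exchange_big /= (eq_bigr (fun _ => #|F|.-1)).
    rewrite sum_nat_const -sum1_card; congr (_ * _).
    rewrite /d' /wtS [RHS]big_mkcond [LHS]big_mkcond /=.
    apply: eq_bigr => i _; rewrite unfold_in; by case: (P i); case: (x ord0 i != 0%R).
  by move=> i /andP [_ xi]; apply: count_alpha.
rewrite ceil_le //.
move: lo; rewrite up; nia.
Qed.

End Gr.

Theorem lemma5 (F : finFieldType) (q n k d : nat) (C : {vspace 'rV[F]_n}) :
  #|F| = q ->
  is_linear_code C k d ->
  griesmer_optimal q n k d ->
  3 <= k ->
  (Gamma q n k d < k -> q %| d) /\ (~~ (q %| d) -> n = griesmer_g q k d).
Proof.
move=> Fq [dimC _ minw] opt k3.
have q0 : 0 < q by rewrite -Fq; apply/card_gt0P; exists 0%R.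
have GB : griesmer_g q k d <= n.
  rewrite -Fq -[n]card_ord.
  apply: (@griesmer_gen F n k C predT) => // y yC yn0.
  have := minw y yC yn0; rewrite /hwt /wtS -sum1_card [in X in _ <= X -> _]big_mkcond /=.
  rewrite big_mkcond /=.
  set a := (\sum_(i < n) _); set b := (\sum_(i < n) _).
  suff -> : a = b by [].
  apply: eq_bigr => i _; rewrite !inE; by case: (y ord0 i != 0%R).
have P2 : ~~ (q %| d) -> n = griesmer_g q k d.
  move=> nd; move: opt GB; rewrite /griesmer_optimal.
  case: k k3 {dimC minw} => // k' _; rewrite g_succ // ltnS => H GB.
  by apply/eqP; rewrite ssrnat.eqn_leq H GB.
split=> //.
move=> G; apply/negPn/negP => nd.
by move: G; rewrite /Gamma (P2 nd) eqxx ltnn.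
Qed.
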